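(* Let $d\ge 2$, $D=\{1,\dots,d\}$, and let $\xi=(\xi_1,\dots,\xi_d)$ be a random vector with centered coordinates. Let $\phi\in\Phi$ be a Young–Orlicz function such that $\beta_i:=\|\xi_i\|_{B(\phi)}\in(0,\infty)$ for every $i\in D$. Suppose moreover that for every $i\in D$ there exists $\delta_i\in(0,\beta_i]$ with $$\mathbf P(\xi_i>u)\ge\exp\big(-\nu[\phi](u/\delta_i)\big)\quad\text{for all }u\ge 1.$$ Then for all $u\ge1$, $$\mathbf P\Big(\max_{i\in D}\xi_i>u\Big)\ \ge\ \sum_{i\in D}\exp\big(-\nu[\phi](u/\delta_i)\big)\ -\sum_{\substack{i,j\in D\\ i\neq j}}\exp\Big(-\nu[\phi]\Big(\frac{2u}{\beta_i+\beta_j}\Big)\Big),$$ where the double sum runs over ordered pairs $(i,j)$ with $i\ne j$.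
   Context: A Young–Orlicz function is a function $\phi:(-\lambda_0,\lambda_0)\to[0,\infty)$, for some $\lambda_0\in(0,\infty]$, which is even, strictly convex, twice continuously differentiable, positive for positive arguments, with $\phi(0)=0$, $\phi'(0)=0$, $\phi''(0)\in(0,\infty)$; $\Phi$ denotes the set of all such functions. For a centered random variable $\eta$, its $B(\phi)$-norm is $$\|\eta\|_{B(\phi)}:=\inf\{\tau\ge 0:\ \mathbf E\exp(\pm\lambda\eta)\le\exp(\phi(\lambda\tau))\ \text{for all real }\lambda\text{ with }|\lambda\tau|<\lambda_0\},$$ and $B(\phi)$ is the space of centered random variables with finite such norm. The Young–Fenchel (Legendre) transform of $\phi$ is $\nu[\phi](x):=\sup_{|\lambda|<\lambda_0}(\lambda x-\phi(\lambda))$. *)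

(* Defs.v *)
From HB Require Import structures.
From mathcomp Require Import all_boot all_order all_algebra.
From mathcomp Require Import all_classical all_reals all_analysis.
Set Implicit Arguments. Unset Strict Implicit. Unset Printing Implicit Defensive.
Import Order.TTheory GRing.Theory Num.Theory.
Import numFieldNormedType.Exports.
Local Open Scope classical_set_scope.
Local Open Scope ring_scope.

Definition YOdom {R : realType} (lam0 : \bar R) : set R :=
  [set x | (`|x|%:E < lam0)%E].

(* phi : (-lam0,lam0) -> [0,oo) is a Young-Orlicz function (phi is given as a
   total function R -> R; only its values on the domain matter). *)
Definition YoungOrlicz {R : realType} (lam0 : \bar R) (phi : R -> R) : Prop :=
  [/\ (0 < lam0)%E,
      (forall x, YOdom lam0 x -> 0 <= phi x),
      (forall x, YOdom lam0 x -> phi (- x) = phi x),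
      (forall x y t, YOdom lam0 x -> YOdom lam0 y -> x != y -> 0 < t < 1 ->
          phi (t * x + (1 - t) * y) < t * phi x + (1 - t) * phi y) &
      (forall x, YOdom lam0 x -> derivable phi x 1 /\ derivable (derive1 phi) x 1)] /\
  [/\ (forall x, YOdom lam0 x -> {for x, continuous (derive1 (derive1 phi))}),
      (forall x, YOdom lam0 x -> 0 < x -> 0 < phi x),
      phi 0 = 0, (derive1 phi) 0 = 0 & 0 < (derive1 (derive1 phi)) 0].

Definition Bphi_set {R : realType} {dm : measure_display} {T : measurableType dm}
  (P : probability T R) (lam0 : \bar R) (phi : R -> R) (X : T -> R) : set R :=
  [set tau | 0 <= tau /\
     forall l : R, (`|l * tau|%:E < lam0)%E ->
       (\int[P]_x (expR (l * X x))%:E <= (expR (phi (l * tau)))%:E)%E /\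
       (\int[P]_x (expR (- (l * X x)))%:E <= (expR (phi (l * tau)))%:E)%E].

(* ||X||_{B(phi)} as an extended real (= +oo when no admissible tau). *)
Definition Bphi_norm {R : realType} {dm : measure_display} {T : measurableType dm}
  (P : probability T R) (lam0 : \bar R) (phi : R -> R) (X : T -> R) : \bar R :=
  ereal_inf [set tau%:E | tau in Bphi_set P lam0 phi X].

Definition YFtransform {R : realType} (lam0 : \bar R) (phi : R -> R) (x : R) : \bar R :=
  ereal_sup [set (l * x - phi l)%:E | l in YOdom lam0].

(* exp(-e) for an extended real e, with exp(-(+oo)) = 0.  (The case -oo never
   occurs for e = nu[phi](x) >= 0; it is mapped to 0 arbitrarily.) *)
Definition expNegE {R : realType} (e : \bar R) : R :=
  match e with
  | r%:E => expR (- r)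
  | _ => 0
  end.

(* Main.v *)
Require Import Defs.
From HB Require Import structures.
From mathcomp Require Import all_boot all_order all_algebra.
From mathcomp Require Import all_classical all_reals all_analysis.
From mathcomp Require Import ring lra measurable_realfun.
Import Order.TTheory GRing.Theory Num.Theory.
Import numFieldNormedType.Exports.
Local Open Scope classical_set_scope.
Local Open Scope ring_scope.

Lemma exp_conv (R : realType) (t a b : R) : 0 <= t -> t <= 1 ->
  expR (t * a + (1 - t) * b) <= t * expR a + (1 - t) * expR b.
Proof.
move=> t0 t1; set m := t * a + (1 - t) * b.
have Ea : expR m * (1 + (a - m)) <= expR a.
  by rewrite -[X in _ <= expR X](subrK m) [X in _ <= X]expRD mulrC ler_pM2r ?expR_gt0 // expR_ge1Dx.
have Eb : expR m * (1 + (b - m)) <= expR b.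
  by rewrite -[X in _ <= expR X](subrK m) [X in _ <= X]expRD mulrC ler_pM2r ?expR_gt0 // expR_ge1Dx.
have h2 : t * (1 + (a - m)) + (1 - t) * (1 + (b - m)) = 1 by rewrite /m; ring.
have t1' : 0 <= 1 - t by rewrite subr_ge0.
have := lerD (ler_wpM2l t0 Ea) (ler_wpM2l t1' Eb).
by rewrite mulrCA [X in _ + X <= _]mulrCA -mulrDr h2 mulr1.
Qed.

Lemma measA (R : realType) (dm : measure_display) (T : measurableType dm)
  (P : probability T R) (X : {RV P >-> R}) (u : R) :
  measurable [set x | u < X x].
Proof.
have := measurable_funPTI X (measurable_itv `]u, +oo[).
congr (measurable _); apply/funext => x /=.
by rewrite /preimage /= in_itv /= andbT.
Qed.

Lemma measE (R : realType) (dm : measure_display) (T : measurableType dm)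
  (P : probability T R) (X : {RV P >-> R}) (c : R) (D : set T) :
  measurable_fun D (fun x => (expR (c * X x))%:E : \bar R).
Proof.
apply/measurable_EFinP.
apply: (measurable_funS measurableT) => //.
apply: measurableT_comp => //.
apply: measurable_funM => //.
Qed.

Lemma core (R : realType) (dm : measure_display) (T : measurableType dm)
  (P : probability T R) (lam0 : \bar R) (phi : R -> R) (X Y : {RV P >-> R})
  (ti tj l u : R) :
  Bphi_set P lam0 phi X ti -> Bphi_set P lam0 phi Y tj -> 0 < ti -> 0 < tj ->
  0 < l -> YOdom lam0 l ->
  (P ([set x | (u < X x)%R] `&` [set x | (u < Y x)%R]) * (expR (2 * u * l / (ti + tj)))%:E
     <= (expR (phi l))%:E)%E.
Proof.
move=> [_ SX] [_ SY] ti0 tj0 l0 Ol.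
set s := ti + tj; have s0 : 0 < s by rewrite addr_gt0.
set la := l / s; have la0 : 0 < la by rewrite divr_gt0.
set A := _ `&` _.
have mA : measurable A by apply: measurableI; apply: measA.
have mXY : forall D, measurable_fun D (fun x => (expR (la * X x + la * Y x))%:E : \bar R).
  move=> D; apply/measurable_EFinP; apply: (measurable_funS measurableT) => //.
  apply: measurableT_comp => //; apply: measurable_funD; exact: measurable_funM.
have -> : 2 * u * l / s = 2 * u * la by rewrite /la mulrA.
rewrite muleC -integral_cst //.
apply: (@le_trans _ _ (\int[P]_(x in A) (expR (la * X x + la * Y x))%:E)%E).
  apply: ge0_le_integral => //.
  - by move=> x _; rewrite /cst lee_fin expR_ge0.
  - move=> x [/= hx hy]; rewrite /cst lee_fin ler_expR; nra.
apply: (@le_trans _ _ (\int[P]_(x in setT) (expR (la * X x + la * Y x))%:E)%E).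
  apply: ge0_subset_integral => //.
set th := ti / s.
have th0 : 0 <= th by rewrite divr_ge0 // ltW.
have th1 : th <= 1 by rewrite ler_pdivrMr // mul1r lerDl ltW.
have th1' : 0 <= 1 - th by rewrite subr_ge0.
apply: (@le_trans _ _ (\int[P]_(x in setT) ((th%:E * (expR (l / ti * X x))%:E) +
   ((1 - th)%:E * (expR (l / tj * Y x))%:E)))%E).
  apply: ge0_le_integral => //.
  - apply: emeasurable_funD; apply: emeasurable_funM => //; exact: measE.
  - move=> x _; rewrite -!EFinM -EFinD lee_fin.
    have -> : la * X x + la * Y x = th * (l / ti * X x) + (1 - th) * (l / tj * Y x).
      rewrite /th /la /s; field.
      by apply/andP; split; rewrite ?gt_eqF ?addr_gt0.
    exact: exp_conv.
rewrite ge0_integralD //; last 4 first.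
- by move=> x _; rewrite -EFinM lee_fin mulr_ge0 // expR_ge0.
- by apply: emeasurable_funM; [exact: measurable_cst | exact: measE].
- by move=> x _; rewrite -EFinM lee_fin mulr_ge0 // expR_ge0.
- by apply: emeasurable_funM; [exact: measurable_cst | exact: measE].
rewrite ge0_integralZl //; last exact: measE.
rewrite ge0_integralZl //; last exact: measE.
have h1 := (SX (l / ti) _).1.
have h2 := (SY (l / tj) _).1.
rewrite !divfK ?gt_eqF // in h1 h2.
apply: le_trans (leeD (lee_wpmul2l _ (h1 Ol)) (lee_wpmul2l _ (h2 Ol))) _ => //.
by rewrite -!EFinM -EFinD lee_fin -mulrDl subrKC mul1r.
Qed.

Lemma lim_aux (R : realType) (Z Y t0 : R) : 0 <= Z -> 0 <= Y ->
  (forall q, q < t0 -> exists t, q <= t /\ Z * expR t <= Y) -> Z * expR t0 <= Y.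
Proof.
move=> Z0 Y0 H.
have H1 : forall dl, 0 < dl -> Z * expR t0 <= Y * expR dl.
  move=> dl dl0; have hq : t0 - dl < t0 by rewrite ltrBlDr ltrDl.
  have [t [ht hZ]] := H _ hq.
  have -> : expR t0 = expR t * expR (t0 - t) by rewrite -expRD subrKC.
  rewrite mulrA; apply: le_trans (ler_wpM2r (expR_ge0 _) hZ) _.
  by rewrite ler_wpM2l // ler_expR lerBlDl -lerBlDr.
set W := Z * expR t0.
have W0 : 0 <= W by rewrite mulr_ge0 // expR_ge0.
apply/ler_addgt0Pr => e e0.
case: (lerP W e) => hWe; first by lra.
have Wp : 0 < W by exact: lt_trans e0 hWe.
set dl := e / W.
have dl0 : 0 < dl by rewrite divr_gt0.
have hA := H1 dl dl0.
have hB : expR dl * expR (- dl) = 1 by rewrite -expRD subrr expR0.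
have hC := expR_ge1Dx (- dl).
have hD : W * dl = e by rewrite /dl mulrC divfK ?gt_eqF.
have hE := expR_gt0 (- dl).
have hF : W * expR (- dl) <= Y.
  by rewrite -[Y]mulr1 -hB mulrA ler_wpM2r // ltW.
nra.
Qed.

Lemma approx (R : realType) (dm : measure_display) (T : measurableType dm)
  (P : probability T R) (lam0 : \bar R) (phi : R -> R) (X : T -> R) (b : R) :
  Bphi_norm P lam0 phi X = b%:E -> forall e, 0 < e ->
  exists tau, [/\ Bphi_set P lam0 phi X tau, b <= tau & tau < b + e].
Proof.
move=> hX e e0.
have : (Bphi_norm P lam0 phi X < (b + e)%:E)%E by rewrite hX lte_fin ltrDl.
rewrite /Bphi_norm => /ereal_inf_lt [y [tau Stau <-]] ltt.
exists tau; split => //.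
rewrite -lee_fin -hX; apply: ereal_inf_lbound; by exists tau.
Qed.

Lemma pair (R : realType) (dm : measure_display) (T : measurableType dm)
  (P : probability T R) (lam0 : \bar R) (phi : R -> R) (X Y : {RV P >-> R})
  (bX bY u l : R) :
  Bphi_norm P lam0 phi X = bX%:E -> Bphi_norm P lam0 phi Y = bY%:E ->
  0 < bX -> 0 < bY -> 0 < u -> YOdom lam0 l -> 0 <= phi l ->
  (P ([set x | (u < X x)%R] `&` [set x | (u < Y x)%R])
    <= (expR (- (l * (2 * u / (bX + bY)) - phi l)))%:E)%E.
Proof.
move=> hX hY bX0 bY0 u0 Ol phil.
set A := _ `&` _.
have mA : measurable A by apply: measurableI; apply: measA.
have b0 : 0 < bX + bY by rewrite addr_gt0.
have x0 : 0 < 2 * u / (bX + bY) by rewrite divr_gt0 // mulr_gt0.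
case: (lerP l 0) => l0.
  apply: le_trans (probability_le1 P mA) _.
  rewrite lee_fin; apply: le_trans (expR_ge1Dx _).
  rewrite lerDl; nra.
have fA := fin_num_measure P A mA.
rewrite -(fineK fA); set p := fine (P A).
have p0 : 0 <= p by rewrite fine_ge0 // measure_ge0.
rewrite lee_fin opprB expRD expRN ler_pdivlMr ?expR_gt0 //.
have -> : l * (2 * u / (bX + bY)) = 2 * u * l / (bX + bY) by rewrite mulrA [l * _]mulrC.
apply: lim_aux => //.
move=> q hq.
have c0 : 0 < 2 * u * l by rewrite !mulr_gt0.
have [M [hMb hqM]] : exists M, bX + bY < M /\
    (forall s, 0 < s -> s < M -> q <= 2 * u * l / s).
  case: (lerP q 0) => q0.
    exists (bX + bY + 1); split; first lra.
    move=> s s0 _; apply: le_trans q0 _; rewrite divr_ge0 // ltW //.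
  exists (2 * u * l / q); split.
    by rewrite ltr_pdivlMr // mulrC -ltr_pdivlMr.
  move=> s s0; rewrite ltr_pdivlMr // => hs.
  by rewrite ler_pdivlMr // mulrC ltW.
have e0 : 0 < (M - (bX + bY)) / 2 by rewrite divr_gt0 // subr_gt0.
have [tX [SX hbX hXe]] := @approx _ _ _ P _ _ _ _ hX _ e0.
have [tY [SY hbY hYe]] := @approx _ _ _ P _ _ _ _ hY _ e0.
exists (2 * u * l / (tX + tY)); split.
  by apply: hqM; lra.
have := @core _ _ _ P _ _ X Y _ _ _ u SX SY (lt_le_trans bX0 hbX) (lt_le_trans bY0 hbY) l0 Ol.
by rewrite -(fineK fA) -EFinM lee_fin.
Qed.

Lemma sup_bound (R : realType) (lam0 : \bar R) (phi : R -> R) (x : R) (a : \bar R) :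
  (0 < lam0)%E -> (0 <= a)%E ->
  (forall l, YOdom lam0 l -> a <= (expR (- (l * x - phi l)))%:E)%E ->
  (a <= (expNegE (YFtransform lam0 phi x))%:E)%E.
Proof.
move=> lam00 a0 H.
have O0 : YOdom lam0 0 by rewrite /YOdom /= normr0.
have := H 0 O0.
case: a a0 H => [a'| |] //= a0 H _; rewrite lee_fin in a0.
have claim : forall c, (c%:E < YFtransform lam0 phi x)%E -> a' <= expR (- c).
  move=> c /ereal_sup_gt [y [l Ol <-]]; rewrite lte_fin => hc.
  have := H l Ol; rewrite lee_fin => h; apply: le_trans h _.
  by rewrite ler_expR lerN2 ltW.
case E: (YFtransform lam0 phi x) => [r| |] /=.
- rewrite lee_fin; case: (lerP a' (expR (- r))) => // har.
  have ap : 0 < a' by exact: le_lt_trans (expR_ge0 _) har.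
  have hr : - ln a' < r.
    by rewrite ltrNl -ltr_expR lnK // posrE.
  have := claim ((r + - ln a') / 2); rewrite E lte_fin.
  have -> : (r + - ln a') / 2 < r by lra.
  move=> /(_ isT) h.
  have : expR (- ((r + - ln a') / 2)) < a'.
    by rewrite -[X in _ < X](lnK (x := a')) ?posrE // ltr_expR; lra.
  lra.
- rewrite lee_fin; case: (lerP a' 0) => // ap.
  have := claim (- ln a' + 1); rewrite E ltry => /(_ isT) h.
  have : expR (- (- ln a' + 1)) < a'.
    by rewrite -[X in _ < X](lnK (x := a')) ?posrE // ltr_expR; lra.
  lra.
- have := ereal_sup_ubound (S := [set (l * x - phi l)%:E | l in YOdom lam0]).
  move=> /(_ ((0 * x - phi 0)%:E)) hle.
  have : ((0 * x - phi 0)%:E <= YFtransform lam0 phi x)%E by apply: hle; exists 0.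
  by rewrite E leeNy_eq.
Qed.

Lemma isum (R : realType) (dm : measure_display) (T : measurableType dm)
  (P : probability T R) (I : Type) (f : I -> T -> \bar R) (s : seq I) (p : pred I) :
  (forall n, measurable_fun setT (f n)) -> (forall n x, (0 <= f n x)%E) ->
  (\int[P]_(x in setT) (\sum_(k <- s | p k) f k x) =
   \sum_(k <- s | p k) \int[P]_(x in setT) f k x)%E.
Proof.
move=> mf f0; rewrite -big_filter -ge0_integral_sum //.
by apply: eq_integral => x _; rewrite big_filter.
Qed.

Lemma ptw (R : realType) (T : Type) (d : nat) (A : 'I_d -> set T) (x : T) :
  \sum_(i < d) \1_(A i) x <= \1_(\bigcup_(i in setT) A i) x +
     \sum_(i < d) \sum_(j < d | j != i) (\1_(A i `&` A j) x : R).
Proof.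
have ge0 : forall (B : set T), 0 <= (\1_B x : R) by move=> B; rewrite indicE ler0n.
case: (pselect (exists i, A i x)) => [[i0 hi0]|hn].
  rewrite (bigD1 i0) //= [X in _ <= _ + X](bigD1 i0) //=.
  have -> : (\1_(\bigcup_(i in setT) A i) x : R) = 1.
    by rewrite indicE mem_set //; exists i0.
  have -> : (\1_(A i0) x : R) = 1 by rewrite indicE mem_set.
  rewrite lerD2l -[X in X <= _]addr0; apply: lerD; last first.
    by apply: sumr_ge0 => i _; apply: sumr_ge0 => j _.
  apply: ler_sum => j _; rewrite !indicE.
  by rewrite in_setI (mem_set hi0).
rewrite big1 ?addr_ge0 //; last first.
  by move=> i _; rewrite indicE memNset //= => hi; apply: hn; exists i.
by apply: sumr_ge0 => i _; apply: sumr_ge0 => j _.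
Qed.

Lemma emeas_sumP (R : realType) (dm : measure_display) (T : measurableType dm)
  (I : Type) (s : seq I) (p : pred I) (h : I -> T -> \bar R) :
  (forall n, measurable_fun setT (h n)) ->
  measurable_fun setT (fun x => \sum_(i <- s | p i) h i x).
Proof.
move=> mh.
have -> : (fun x => \sum_(i <- s | p i) h i x) =
          (fun x => \sum_(i <- s) (fun i x => if p i then h i x else 0%E) i x).
  by apply/funext => x; rewrite big_mkcond.
apply: emeasurable_sum => n; case: (p n) => //.
Qed.

Lemma bonf (R : realType) (dm : measure_display) (T : measurableType dm)
  (P : probability T R) (d : nat) (A : 'I_d -> set T) :
  (forall i, measurable (A i)) ->
  (\sum_(i < d) P (A i) <= P (\bigcup_(i in setT) A i) +
     \sum_(i < d) \sum_(j < d | j != i) P (A i `&` A j))%E.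
Proof.
move=> mA.
have mU : measurable (\bigcup_(i in setT) A i).
  by apply: fin_bigcup_measurable => //; apply: finite_finset.
have mI : forall i j, measurable (A i `&` A j) by move=> i j; apply: measurableI.
have ind : forall B : set T, measurable B -> P B = (\int[P]_(x in setT) (\1_B x)%:E)%E.
  by move=> B mB; rewrite integral_indic // setIT.
have mind : forall B : set T, measurable B -> measurable_fun setT (fun x => (\1_B x : R)%:E : \bar R).
  by move=> B mB; apply/measurable_EFinP; exact: measurable_indic.
have ind0 : forall (B : set T) x, (0 <= (\1_B x : R)%:E)%E.
  by move=> B x; rewrite lee_fin indicE ler0n.
have E1 : (\sum_(i < d) P (A i) =
    \int[P]_(x in setT) \sum_(i < d) (\1_(A i) x)%:E)%E.
  rewrite isum //; last by move=> n; exact: mind.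
  by apply: eq_bigr => i _; exact: ind.
have E2 : (\sum_(i < d) \sum_(j < d | j != i) P (A i `&` A j) =
    \int[P]_(x in setT) \sum_(i < d) \sum_(j < d | j != i) (\1_(A i `&` A j) x)%:E)%E.
  rewrite isum //; last 2 first.
  - by move=> n; apply: emeas_sumP => m; exact: mind.
  - by move=> n x; apply: sume_ge0.
  apply: eq_bigr => i _; rewrite isum //; last by move=> n; exact: mind.
  by apply: eq_bigr => j _; exact: ind.
rewrite E1 E2 (ind _ mU) -ge0_integralD //; last 2 first.
- by move=> x _; apply: sume_ge0 => i _; apply: sume_ge0.
- by apply: emeas_sumP => n; apply: emeas_sumP => m; exact: mind.
apply: ge0_le_integral => //.
- by move=> x _; apply: sume_ge0.
- by apply: emeas_sumP => n; exact: mind.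
- by apply: emeasurable_funD; [exact: mind | apply: emeas_sumP => n; apply: emeas_sumP => m; exact: mind].
- move=> x _.
  rewrite sumEFin (eq_bigr (fun i => (\sum_(j < d | j != i) (\1_(A i `&` A j) x : R))%:E)); last first.
    by move=> i _; rewrite sumEFin.
  by rewrite sumEFin -EFinD lee_fin ptw.
- exact: mind.
Qed.

Theorem proposition4p1 (R : realType) (dm : measure_display) (T : measurableType dm)
  (P : probability T R) (d : nat) (xi : 'I_d -> {RV P >-> R})
  (lam0 : \bar R) (phi : R -> R) (beta delta : 'I_d -> R) :
  (2 <= d)%N ->
  (forall i, P.-integrable setT (EFin \o xi i) /\ ('E_P[xi i] = 0)%E) ->
  YoungOrlicz lam0 phi ->
  (forall i, Bphi_norm P lam0 phi (xi i) = (beta i)%:E /\ 0 < beta i) ->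
  (forall i, 0 < delta i <= beta i) ->
  (forall i (u : R), 1 <= u ->
     (P [set x | (u < xi i x)%R] >= (expNegE (YFtransform lam0 phi (u / delta i)))%:E)%E) ->
  forall u : R, 1 <= u ->
    (P [set x | (u%:E < \big[Order.max/-oo]_(i < d) (xi i x)%:E)%E] >=
      (\sum_(i < d) expNegE (YFtransform lam0 phi (u / delta i))
       - \sum_(i < d) \sum_(j < d | j != i)
           expNegE (YFtransform lam0 phi (2 * u / (beta i + beta j))))%:E)%E.
Proof.
move=> d2 _ YO hB hdel hlow u u1.
have lam00 : (0 < lam0)%E by case: YO => [[]].
have phi0 : forall x, YOdom lam0 x -> 0 <= phi x by case: YO => [[]].
have u0 : 0 < u by exact: lt_le_trans ltr01 u1.
set A := fun i => [set x | (u < xi i x)%R].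
have mA : forall i, measurable (A i) by move=> i; apply: measA.
have EU : [set x | (u%:E < \big[Order.max/-oo]_(i < d) (xi i x)%:E)%E] =
          \bigcup_(i in setT) A i.
  apply/seteqP; split => x /=.
    move=> h; case: (pselect (exists i, u < xi i x)) => [[i hi]|hn].
      by exists i.
    exfalso; move: h; apply/negP; rewrite -leNgt; apply/bigmax_leP.
    split => [|i _]; first exact: leNye.
    rewrite lee_fin leNgt; apply/negP => hi; apply: hn; exists i; exact: hi.
  move=> [i _ hi]; apply: lt_le_trans (le_bigmax _ _ i).
  by rewrite lte_fin.
rewrite EU.
have mU : measurable (\bigcup_(i in setT) A i).
  by apply: fin_bigcup_measurable => //; apply: finite_finset.
have fU := fin_num_measure P _ mU.
have Hb := @bonf _ _ _ P d A mA.
have H1 : ((\sum_(i < d) expNegE (YFtransform lam0 phi (u / delta i)))%:E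
           <= \sum_(i < d) P (A i))%E.
  by rewrite -sumEFin; apply: lee_sum => i _; exact: hlow.
have H2 : (\sum_(i < d) \sum_(j < d | j != i) P (A i `&` A j) <=
   (\sum_(i < d) \sum_(j < d | j != i)
           expNegE (YFtransform lam0 phi (2 * u / (beta i + beta j))))%:E)%E.
  rewrite -sumEFin; apply: lee_sum => i _; rewrite -sumEFin; apply: lee_sum => j _.
  apply: sup_bound => //.
  move=> l Ol; apply: (@pair _ _ _ P lam0 phi (xi i) (xi j)) => //.
  - exact: (hB i).1.
  - exact: (hB j).1.
  - exact: (hB i).2.
  - exact: (hB j).2.
  - exact: phi0.
have := le_trans H1 (le_trans Hb (leeD2l _ H2)).
rewrite -(fineK fU) -EFinD !lee_fin.
lra.
Qed.
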